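(* Let $M\ge2$, observe $\mathbf y=\mathbf f+\boldsymbol\xi\in\mathbf R^n$ where $\xi_1,\dots,\xi_n$ are i.i.d. centered with variance $\sigma^2$, and for $j=1,\dots,M$ let $\hat{\boldsymbol\mu}_j=A_j\mathbf y+\mathbf b_j$ with deterministic $n\times n$ matrices $A_j$ and deterministic $\mathbf b_j\in\mathbf R^n$. Let $\hat{\boldsymbol\theta}_{\mathrm{pen}}\in\arg\min_{\boldsymbol\theta\in\Lambda^M}H_{\mathrm{pen}}(\boldsymbol\theta)$. Then almost surely \[\|\hat{\boldsymbol\mu}_{\hat{\boldsymbol\theta}_{\mathrm{pen}}}-\mathbf f\|_2^2\le\min_{q=1,\dots,M}\|\hat{\boldsymbol\mu}_q-\mathbf f\|_2^2+\max_{j,k=1,\dots,M}\Big(\Delta_{jk}-\tfrac12\|\hat{\boldsymbol\mu}_j-\hat{\boldsymbol\mu}_k\|_2^2\Big),\] where $\Delta_{jk}=2\boldsymbol\xi^T((A_j-A_k)\mathbf f+\mathbf b_j-\mathbf b_k)+2\big(\boldsymbol\xi^T(A_j-A_k)\boldsymbol\xi-\sigma^2\mathrm{Tr}(A_j-A_k)\big)$. Furthermore, for all $j,k=1,\dots,M$, \[\mathbb E\Big[\tfrac12\|\hat{\boldsymbol\mu}_j-\hat{\boldsymbol\mu}_k\|_2^2\Big]=\tfrac12\|(A_j-A_k)\mathbf f+\mathbf b_j-\mathbf b_k\|_2^2+\tfrac{\sigma^2}{2}\|A_j-A_k\|_F^2.\]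
   Context: $\Lambda^M=\{\boldsymbol\theta\in\mathbf R^M:\sum_j\theta_j=1,\theta_j\ge0\}$. For $\boldsymbol\theta\in\Lambda^M$: $A_{\boldsymbol\theta}=\sum_j\theta_jA_j$, $\mathbf b_{\boldsymbol\theta}=\sum_j\theta_j\mathbf b_j$, $\hat{\boldsymbol\mu}_{\boldsymbol\theta}=A_{\boldsymbol\theta}\mathbf y+\mathbf b_{\boldsymbol\theta}$. $C_p(\boldsymbol\theta)=\|\hat{\boldsymbol\mu}_{\boldsymbol\theta}\|_2^2-2\mathbf y^T\hat{\boldsymbol\mu}_{\boldsymbol\theta}+2\sigma^2\mathrm{Tr}(A_{\boldsymbol\theta})$, $\mathrm{pen}(\boldsymbol\theta)=\sum_j\theta_j\|\hat{\boldsymbol\mu}_{\boldsymbol\theta}-\hat{\boldsymbol\mu}_j\|_2^2$, $H_{\mathrm{pen}}=C_p+\tfrac12\mathrm{pen}$. $\|\cdot\|_F$ is the Frobenius norm. *)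

(* Defs.v *)
From HB Require Import structures.
From mathcomp Require Import all_boot all_order all_algebra.
From mathcomp Require Import all_classical all_reals all_analysis.
Set Implicit Arguments. Unset Strict Implicit. Unset Printing Implicit Defensive.
Import Order.TTheory GRing.Theory Num.Theory.
Local Open Scope classical_set_scope.
Local Open Scope ring_scope.

Section Aggregation.
Variables (R : realType) (n M : nat).

Definition sqnorm (v : 'cV[R]_n) : R := \sum_(i < n) v i 0 ^+ 2.

Definition frob2 (A : 'M[R]_n) : R := \sum_(i < n) \sum_(j < n) A i j ^+ 2.

Definition dotv (u v : 'cV[R]_n) : R := \sum_(i < n) u i 0 * v i 0.

Definition simplex (theta : 'I_M -> R) : Prop :=
  (\sum_(j < M) theta j = 1) /\ (forall j, 0 <= theta j).

Variables (A : 'I_M -> 'M[R]_n) (b : 'I_M -> 'cV[R]_n).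

Definition Ath (theta : 'I_M -> R) : 'M[R]_n := \sum_(j < M) theta j *: A j.
Definition bth (theta : 'I_M -> R) : 'cV[R]_n := \sum_(j < M) theta j *: b j.

Definition muhat (y : 'cV[R]_n) (j : 'I_M) : 'cV[R]_n := A j *m y + b j.
Definition muth (y : 'cV[R]_n) (theta : 'I_M -> R) : 'cV[R]_n :=
  Ath theta *m y + bth theta.

Definition Cp (sigma : R) (y : 'cV[R]_n) (theta : 'I_M -> R) : R :=
  sqnorm (muth y theta) - 2 * dotv y (muth y theta)
  + 2 * sigma ^+ 2 * \tr (Ath theta).

Definition pen (y : 'cV[R]_n) (theta : 'I_M -> R) : R :=
  \sum_(j < M) theta j * sqnorm (muth y theta - muhat y j).

Definition Hpen (sigma : R) (y : 'cV[R]_n) (theta : 'I_M -> R) : R :=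
  Cp sigma y theta + pen y theta / 2.

Definition Delta (sigma : R) (f xi : 'cV[R]_n) (j k : 'I_M) : R :=
  2 * dotv xi ((A j - A k) *m f + b j - b k)
  + 2 * (dotv xi ((A j - A k) *m xi) - sigma ^+ 2 * \tr (A j - A k)).

End Aggregation.

Definition mutually_independent d (T : measurableType d) (R : realType)
  (P : probability T R) (n : nat) (X : 'I_n -> T -> R) : Prop :=
  forall B : 'I_n -> set R, (forall i, measurable (B i)) ->
    P (\bigcap_i (X i @^-1` B i)) = (\prod_(i < n) P (X i @^-1` B i))%E.

Definition identically_distributed d (T : measurableType d) (R : realType)
  (P : probability T R) (n : nat) (X : 'I_n -> T -> R) : Prop :=
  forall (i j : 'I_n) (B : set R), measurable B ->
    P (X i @^-1` B) = P (X j @^-1` B).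

(* Main.v *)
Require Import Defs.
From HB Require Import structures.
From mathcomp Require Import all_boot all_order all_algebra.
From mathcomp Require Import all_classical all_reals all_analysis.
From mathcomp Require Import measurable_realfun.
From mathcomp Require Import ring lra.
Import Order.TTheory GRing.Theory Num.Theory.
Local Open Scope classical_set_scope.
Local Open Scope ring_scope.

Definition pairf d (T : measurableType d) (R : realType) (X Y : T -> R) :=
  fun w => (X w, Y w).
Arguments pairf {d T R}.

Section pairmf.
Context d (T : measurableType d) (R : realType) (X Y : {mfun T >-> R}).
Lemma pairf_mf : measurable_fun setT (pairf X Y).
Proof. exact: measurable_fun_pair. Qed.
HB.instance Definition _ := isMeasurableFun.Build _ _ _ _ (pairf X Y) pairf_mf.
End pairmf.

Section indep_mul0_sec.
Lemma indep_mul0 d (T : measurableType d) (R : realType) (P : probability T R)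
  (X Y : {RV P >-> R}) :
  (forall A B, measurable A -> measurable B ->
     P (X @^-1` A `&` Y @^-1` B) = (P (X @^-1` A) * P (Y @^-1` B))%E) ->
  (X : T -> R) \in Lfun P 2%:E -> (Y : T -> R) \in Lfun P 2%:E ->
  ('E_P[Y] = 0)%E -> ('E_P[X \* Y] = 0)%E.
Proof.
move=> ind LX LY EY.
Local Open Scope ereal_scope.
pose Z : {RV P >-> (R * R)%type} := pairf X Y.
pose m1 := distribution P X; pose m2 := distribution P Y.
have eqm : forall S, measurable S -> (m1 \x m2) S = distribution P Z S.
  apply: product_measure_unique => A B mA mB.
  rewrite /= /pushforward -ind //.
pose f := fun z : R * R => (z.1 * z.2)%:E.
have mf : measurable_fun [set: (R * R)%type] (f : (R * R)%type -> \bar R).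
  apply/measurable_EFinP; apply: measurable_funM.
    exact: measurable_fst. exact: measurable_snd.
have iP : P.-integrable setT (f \o Z).
  by apply/Lfun1_integrable; exact: Lfun2_mul_Lfun1.
have iZ : (distribution P Z).-integrable setT f.
  exact: integrable_pushforward.
have i12 : (m1 \x m2).-integrable setT f.
  apply/integrableP; split => //.
  rewrite (eq_measure_integral (distribution P Z)); last by move=> *; apply: eqm.
  by move/integrableP: iZ => [].
rewrite expectation_def.
have -> : \int[P]_w ((X \* Y) w)%:E = \int[P]_w (f \o Z) w by [].
rewrite -integral_distribution //.
rewrite (eq_measure_integral (m1 \x m2)); last first.
move=> A mA _; exact/esym/eqm.
rewrite -integral12_prod_meas1 //.
have iY : m2.-integrable setT EFin.
  apply: integrable_pushforward => //.
  by apply/Lfun1_integrable; apply: Lfun_subset12 => //; rewrite fin_num_measure.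
rewrite /fubini_F.
transitivity (\int[m1]_x (cst 0%E x)); last by rewrite integral0.
apply: eq_integral => x _.
rewrite /f /=.
under eq_integral do rewrite EFinM.
rewrite integralZl //.
have : \int[m2]_y y%:E = 'E_P[Y].
  rewrite expectation_def -integral_distribution //.
  by apply/Lfun1_integrable; apply: Lfun_subset12 => //; rewrite fin_num_measure.
by move=> ->; rewrite EY mule0.
Qed.

End indep_mul0_sec.

Lemma indep_pair d (T : measurableType d) (R : realType) (P : probability T R)
  (n : nat) (X : 'I_n -> T -> R) (l m : 'I_n) :
  mutually_independent P X -> l != m ->
  forall A B, measurable A -> measurable B ->
     P (X l @^-1` A `&` X m @^-1` B) = (P (X l @^-1` A) * P (X m @^-1` B))%E.
Proof.
move=> ind lm A B mA mB.
pose Bf := fun i : 'I_n => if i == l then A else if i == m then B else setT.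
have mBf : forall i, measurable (Bf i).
  by move=> i; rewrite /Bf; case: ifP => _ //; case: ifP.
have := ind Bf mBf.
have -> : \bigcap_i (X i @^-1` Bf i) = X l @^-1` A `&` X m @^-1` B.
  apply/seteqP; split => w.
    move=> H; split.
      by have := H l I; rewrite /Bf eqxx.
    by have := H m I; rewrite /Bf eqxx eq_sym (negbTE lm).
  move=> [Hl Hm] i _; rewrite /Bf.
  case: ifP => [/eqP -> //|_]; case: ifP => [/eqP -> //|_] //.
move=> ->.
rewrite (bigD1 l) //= (bigD1 m) 1?eq_sym //=.
rewrite /Bf eqxx eq_sym (negbTE lm) eqxx.
rewrite big1 ?mule1 //.
move=> i /andP[il im]; rewrite (negbTE il) (negbTE im) preimage_setT.
exact: probability_setT.
Qed.

Definition Er d (T : measurableType d) (R : realType) (P : probability T R) (X : T -> R) : R :=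
  fine ('E_P[X])%E.
Arguments Er {d T R} P X.

Section Erlemmas.
Context d (T : measurableType d) (R : realType) (P : probability T R).

Lemma ErE (X : T -> R) : X \in Lfun P 1 -> 'E_P[X]%E = (Er P X)%:E.
Proof. by move=> h; rewrite /Er fineK // expectation_fin_num. Qed.

Lemma Lfun_sum k (F : 'I_k -> T -> R) : (forall i, F i \in Lfun P 1) ->
  (fun w => \sum_(i < k) F i w) \in Lfun P 1.
Proof. by move=> h; rewrite -fct_sumE; apply: rpred_sum. Qed.

Lemma Lfun_scal (c : R) (X : T -> R) : X \in Lfun P 1 -> (fun w => c * X w) \in Lfun P 1.
Proof. move=> h; have -> : (fun w => c * X w) = c *: X by []. exact: rpredZ. Qed.

Lemma Er_sum k (F : 'I_k -> T -> R) : (forall i, F i \in Lfun P 1) ->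
  Er P (fun w => \sum_(i < k) F i w) = \sum_(i < k) Er P (F i).
Proof.
elim: k F => [|k IH] F h.
  rewrite big_ord0 /Er.
  have -> : (fun w : T => \sum_(i < 0) F i w) = cst 0 by apply/funext => w; rewrite big_ord0.
  by rewrite expectation_cst.
rewrite big_ord_recr /=.
have -> : (fun w : T => \sum_(i < k.+1) F i w) =
  (fun w => \sum_(i < k) F (widen_ord (leqnSn k) i) w) \+ F ord_max.
  by apply/funext => w; rewrite big_ord_recr.
rewrite /Er expectationD; last 2 first.
- by apply: Lfun_sum => i; apply: h.
- exact: h.
rewrite !ErE //; last by apply: Lfun_sum => i; apply: h.
by rewrite -EFinD /= -IH // => i; apply: h.
Qed.

Lemma Er_scal (c : R) (X : T -> R) : X \in Lfun P 1 -> Er P (fun w => c * X w) = c * Er P X.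
Proof.
move=> h; rewrite /Er.
have -> : (fun w => c * X w) = c \o* X by apply/funext => w /=; rewrite mulrC.
by rewrite expectationZl // ErE.
Qed.

Lemma Er_cst (c : R) : Er P (fun _ => c) = c.
Proof. by rewrite /Er -/(cst c) expectation_cst. Qed.

Lemma Er_add (X Y : T -> R) : X \in Lfun P 1 -> Y \in Lfun P 1 ->
  Er P (fun w => X w + Y w) = Er P X + Er P Y.
Proof.
move=> hX hY; rewrite /Er; have -> : (fun w => X w + Y w) = X \+ Y by [].
by rewrite expectationD // !ErE.
Qed.

Lemma E_quad (n : nat) (x : 'I_n -> T -> R) (sigma : R) (u : 'cV[R]_n) (D : 'M[R]_n) :
  (forall l, x l \in Lfun P 1) -> (forall l m, x l \* x m \in Lfun P 1) ->
  (forall l, Er P (x l) = 0) ->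
  (forall l m, Er P (x l \* x m) = if l == m then sigma ^+ 2 else 0) ->
  ('E_P[fun w => (sqnorm (u + D *m \col_i x i w) / 2)%R]
    = (sqnorm u / 2 + sigma ^+ 2 / 2 * frob2 D)%R%:E)%E.
Proof.
move=> L1 L2 E1 E2.
pose G := fun w => \sum_(i < n) ((u i 0 ^+ 2 / 2 + \sum_(l < n) (u i 0 * D i l) * x l w)
   + \sum_(l < n) \sum_(m < n) (D i l * D i m / 2) * (x l w * x m w)).
have -> : (fun w => sqnorm (u + D *m \col_i x i w) / 2) = G.
  apply/funext => w; rewrite /G /sqnorm mulr_suml; apply: eq_bigr => i _.
  rewrite !mxE.
  have -> : \sum_j D i j * (\col_i0 x i0 w) j 0 = \sum_(l < n) D i l * x l w.
    by apply: eq_bigr => l _; rewrite mxE.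
  rewrite sqrrD mulrDl mulrDl; congr (_ + _ + _).
    rewrite -mulr_natr mulfK ?pnatr_eq0 // big_distrr /=; apply: eq_bigr => l _.
    by rewrite mulrA.
  rewrite expr2 big_distrl /= mulr_suml; apply: eq_bigr => l _.
  rewrite big_distrr /= mulr_suml; apply: eq_bigr => m _.
  by field.
have Lin : forall i : 'I_n, (fun w => \sum_(l < n) (u i 0 * D i l) * x l w) \in Lfun P 1.
  by move=> i; apply: Lfun_sum => l; apply: Lfun_scal.
have Lq : forall i : 'I_n, (fun w => \sum_(l < n) \sum_(m < n) (D i l * D i m / 2) * (x l w * x m w)) \in Lfun P 1.
  move=> i; apply: Lfun_sum => l; apply: Lfun_sum => m; apply: Lfun_scal; exact: L2.
have Lc : forall c : R, (fun _ : T => c) \in Lfun P 1 by move=> c; exact: Lfun_cst.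
have LG : forall i : 'I_n, (fun w => (u i 0 ^+ 2 / 2 + \sum_(l < n) (u i 0 * D i l) * x l w)
   + \sum_(l < n) \sum_(m < n) (D i l * D i m / 2) * (x l w * x m w)) \in Lfun P 1.
  move=> i; have -> : (fun w => (u i 0 ^+ 2 / 2 + \sum_(l < n) (u i 0 * D i l) * x l w) + \sum_(l < n) \sum_(m < n) (D i l * D i m / 2) * (x l w * x m w)) = ((fun=> u i 0 ^+ 2 / 2) + (fun w => \sum_(l < n) (u i 0 * D i l) * x l w)) + (fun w => \sum_(l < n) \sum_(m < n) (D i l * D i m / 2) * (x l w * x m w)) by [].
  by rewrite rpredD // rpredD.
transitivity ((Er P G)%:E)%E; first by apply: ErE; apply: Lfun_sum.
congr EFin; rewrite /G Er_sum //.
rewrite /sqnorm /frob2 mulr_suml mulr_sumr -big_split /=; apply: eq_bigr => i _.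
rewrite Er_add //; last exact: (rpredD (Lc _) (Lin i)).
rewrite Er_add // Er_cst Er_sum; last by move=> l; apply: Lfun_scal.
rewrite big1 ?addr0; last by move=> l _; rewrite Er_scal // E1 mulr0.
congr (_ + _); rewrite Er_sum; last by move=> l; apply: Lfun_sum => m; apply: Lfun_scal; exact: L2.
rewrite mulr_sumr; apply: eq_bigr => l _.
rewrite Er_sum; last by move=> m; apply: Lfun_scal; exact: L2.
rewrite (bigD1 l) //= big1 ?addr0.
  by rewrite (@Er_scal _ (x l \* x l)) // E2 eqxx; field.
move=> m /negbTE ml.
by rewrite (@Er_scal _ (x l \* x m)) // E2 eq_sym ml mulr0.
Qed.

End Erlemmas.

Section vec.
Context (R : realType) (n M : nat).
Implicit Types (u v w : 'cV[R]_n).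

Lemma dotvC u v : dotv u v = dotv v u.
Proof. by apply: eq_bigr => i _; rewrite mulrC. Qed.

Lemma dotvDr u v w : dotv u (v + w) = dotv u v + dotv u w.
Proof. by rewrite /dotv -big_split; apply: eq_bigr => i _; rewrite mxE mulrDr. Qed.

Lemma dotvNr u v : dotv u (- v) = - dotv u v.
Proof. by rewrite /dotv -sumrN; apply: eq_bigr => i _; rewrite mxE mulrN. Qed.

Lemma dotvBr u v w : dotv u (v - w) = dotv u v - dotv u w.
Proof. by rewrite dotvDr dotvNr. Qed.

Lemma dotvZr u v (a : R) : dotv u (a *: v) = a * dotv u v.
Proof. by rewrite /dotv mulr_sumr; apply: eq_bigr => i _; rewrite mxE mulrCA. Qed.

Lemma dotvDl u v w : dotv (v + w) u = dotv v u + dotv w u.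
Proof. by rewrite dotvC dotvDr !(dotvC u). Qed.

Lemma dotvBl u v w : dotv (v - w) u = dotv v u - dotv w u.
Proof. by rewrite dotvC dotvBr !(dotvC u). Qed.

Lemma dotvZl u v (a : R) : dotv (a *: v) u = a * dotv v u.
Proof. by rewrite dotvC dotvZr dotvC. Qed.

Lemma dotv_sumr u (th : 'I_M -> R) (v : 'I_M -> 'cV[R]_n) :
  dotv u (\sum_j th j *: v j) = \sum_j th j * dotv u (v j).
Proof.
elim/big_ind2: _ => //.
- by rewrite /dotv big1 // => i _; rewrite mxE mulr0.
- by move=> x1 x2 y1 y2 <- <-; rewrite dotvDr.
- by move=> j _; rewrite dotvZr.
Qed.

Lemma sqnormE u : sqnorm u = dotv u u.
Proof. by apply: eq_bigr => i _; rewrite expr2. Qed.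

Lemma sqnormD u v : sqnorm (u + v) = sqnorm u + 2 * dotv u v + sqnorm v.
Proof. rewrite !sqnormE dotvDl !dotvDr (dotvC v u); ring. Qed.

Lemma sqnormB u v : sqnorm (u - v) = sqnorm u - 2 * dotv u v + sqnorm v.
Proof. rewrite !sqnormE dotvBl !dotvBr (dotvC v u); ring. Qed.

Lemma sqnorm_ge0 u : 0 <= sqnorm u.
Proof. by apply: sumr_ge0 => i _; apply: sqr_ge0. Qed.

Variables (A : 'I_M -> 'M[R]_n) (b : 'I_M -> 'cV[R]_n).

Lemma muth_sum y th : muth A b y th = \sum_j th j *: muhat A b y j.
Proof.
rewrite /muth /Ath /bth mulmx_suml -big_split; apply: eq_bigr => j _.
by rewrite /muhat scalerDr scalemxAl.
Qed.

Lemma tr_Ath th : \tr (Ath A th) = \sum_j th j * \tr (A j).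
Proof. rewrite /Ath raddf_sum; apply: eq_bigr => j _; exact: mxtraceZ. Qed.

Definition cc sigma y j := - 2 * dotv y (muhat A b y j) + 2 * sigma ^+ 2 * \tr (A j)
   + sqnorm (muhat A b y j) / 2.

Lemma HpenE sigma y th : \sum_j th j = 1 ->
  Hpen A b sigma y th = \sum_j th j * cc sigma y j + sqnorm (muth A b y th) / 2.
Proof.
move=> s1.
set m := muth A b y th.
have hm : m = \sum_j th j *: muhat A b y j by rewrite /m muth_sum.
have ep : pen A b y th = \sum_j th j * sqnorm (muhat A b y j) - sqnorm m.
  rewrite /pen -/m.
  have -> : \sum_j th j * sqnorm (m - muhat A b y j) =
     sqnorm m * (\sum_j th j) - 2 * (\sum_j th j * dotv m (muhat A b y j))
     + \sum_j th j * sqnorm (muhat A b y j).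
    rewrite !mulr_sumr -sumrB -big_split /=; apply: eq_bigr => j _.
    rewrite sqnormB; ring.
  rewrite s1 -dotv_sumr -hm -sqnormE; ring.
rewrite /Hpen /Cp ep -/m tr_Ath {2}hm dotv_sumr.
have -> : \sum_j th j * cc sigma y j = -2 * (\sum_j th j * dotv y (muhat A b y j))
   + 2 * sigma ^+ 2 * (\sum_j th j * \tr (A j)) + (\sum_j th j * sqnorm (muhat A b y j)) / 2.
  rewrite !mulr_sumr mulr_suml -!big_split /=; apply: eq_bigr => j _.
  rewrite /cc; ring.
lra.
Qed.

Lemma scal_lem (K V : R) : 0 <= V ->
  (forall t : R, 0 < t -> t <= 1 -> 0 <= t * K + t ^+ 2 / 2 * V) -> 0 <= K.
Proof.
move=> V0 h; rewrite leNgt; apply/negP => K0.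
pose t := Num.min 1 (- K / (V + 1)).
have V1 : 0 < V + 1 by lra.
have q0 : 0 < - K / (V + 1) by apply: divr_gt0; lra.
have t0 : 0 < t by rewrite /t lt_min ltr01 q0.
have t1 : t <= 1 by rewrite /t ge_min lexx.
have tq : t <= - K / (V + 1) by rewrite /t ge_min lexx orbT.
have tV : t * (V + 1) <= - K by rewrite -ler_pdivlMr.
have := h t t0 t1.
have : t * (t * V) <= t * (- K) by rewrite ler_pM2l //; nra.
nra.
Qed.

Definition ev (q : 'I_M) : 'I_M -> R := fun j => (j == q)%:R.

Lemma sum_ev q (F : 'I_M -> R) : \sum_j ev q j * F j = F q.
Proof.
rewrite (bigD1 q) //= /ev eqxx mul1r big1 ?addr0 // => j /negbTE ->.
by rewrite mul0r.
Qed.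

Lemma sum_evZ q (F : 'I_M -> 'cV[R]_n) : \sum_j ev q j *: F j = F q.
Proof.
rewrite (bigD1 q) //= /ev eqxx scale1r big1 ?addr0 // => j /negbTE ->.
by rewrite scale0r.
Qed.

Lemma simplex_ev q : simplex (ev q).
Proof.
split; last by move=> j; rewrite /ev ler0n.
by have := sum_ev q (fun _ => 1); under eq_bigr do rewrite mulr1.
Qed.

Lemma opt_vertex sigma y th q : simplex th ->
  (forall theta, simplex theta -> Hpen A b sigma y th <= Hpen A b sigma y theta) ->
  Hpen A b sigma y th + sqnorm (muhat A b y q - muth A b y th) / 2
    <= Hpen A b sigma y (ev q).
Proof.
move=> [s1 s0] hmin.
pose tht (t : R) := fun j => (1 - t) * th j + t * ev q j.
have stht : forall t, 0 <= t -> t <= 1 -> simplex (tht t).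
  move=> t t0 t1; split.
    rewrite /tht big_split /= -!mulr_sumr s1.
    by have := (simplex_ev q).1 => ->; ring.
  move=> j; apply: addr_ge0; apply: mulr_ge0 => //; first lra.
have sev : \sum_j ev q j = 1 by have [] := simplex_ev q.
set m := muth A b y th.
set mq := muhat A b y q.
set L := \sum_j th j * cc sigma y j.
set cq := cc sigma y q.
have Hth : Hpen A b sigma y th = L + sqnorm m / 2 by rewrite HpenE.
have Hq : Hpen A b sigma y (ev q) = cq + sqnorm mq / 2.
  by rewrite HpenE // sum_ev muth_sum sum_evZ.
have Ht : forall t, Hpen A b sigma y (tht t) =
   (1 - t) * L + t * cq + ((1 - t) ^+ 2 * sqnorm m + 2 * t * (1 - t) * dotv m mq
      + t ^+ 2 * sqnorm mq) / 2.
  move=> t; rewrite HpenE; last first.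
    by rewrite /tht big_split /= -!mulr_sumr s1 sev; ring.
  have -> : muth A b y (tht t) = (1 - t) *: m + t *: mq.
    rewrite muth_sum /m muth_sum /tht.
    under eq_bigr do rewrite scalerDl -!scalerA.
    by rewrite big_split /= -!scaler_sumr sum_evZ.
  have -> : \sum_j tht t j * cc sigma y j = (1 - t) * L + t * cq.
    rewrite /tht.
    under eq_bigr do rewrite mulrDl -!mulrA.
    by rewrite big_split /= -!mulr_sumr sum_ev.
  rewrite sqnormD !sqnormE !dotvZl !dotvZr; ring.
rewrite Hth Hq sqnormB (dotvC mq m).
set a := sqnorm m; set p := dotv m mq; set r := sqnorm mq.
have V0 : 0 <= a - 2 * p + r by rewrite /a /p /r -sqnormB sqnorm_ge0.
suff : 0 <= cq - L - a + p by lra.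
apply: (@scal_lem _ _ V0) => t t0 t1.
have := hmin _ (stht t (ltW t0) t1).
rewrite Hth Ht -/a -/p -/r => h.
suff -> : t * (cq - L - a + p) + t ^+ 2 / 2 * (a - 2 * p + r) = (1 - t) * L + t * cq + ((1 - t) ^+ 2 * a + 2 * t * (1 - t) * p + t ^+ 2 * r) / 2 - (L + a / 2) by lra.
by field.
Qed.

Lemma DeltaE sigma f xi j k :
  Delta A b sigma f xi j k = 2 * dotv xi (muhat A b (f + xi) j - muhat A b (f + xi) k)
     - 2 * sigma ^+ 2 * (\tr (A j) - \tr (A k)).
Proof.
have -> : muhat A b (f + xi) j - muhat A b (f + xi) k =
  ((A j - A k) *m f + b j - b k) + (A j - A k) *m xi.
  rewrite /muhat !mulmxBl !mulmxDr; apply/matrixP => i l; rewrite !mxE; ring.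
rewrite /Delta raddfB /= [in RHS]dotvDr; ring.
Qed.

Local Opaque dotv sqnorm.
Lemma oracle_real sigma f xi th q : simplex th ->
  (forall theta, simplex theta ->
     Hpen A b sigma (f + xi) th <= Hpen A b sigma (f + xi) theta) ->
  sqnorm (muth A b (f + xi) th - f) <= sqnorm (muhat A b (f + xi) q - f)
   + \sum_j th j * (Delta A b sigma f xi j q
        - sqnorm (muhat A b (f + xi) j - muhat A b (f + xi) q) / 2).
Proof.
move=> sth hmin; have := @opt_vertex sigma (f + xi) th q sth hmin.
case: sth => s1 s0.
set y := f + xi.
rewrite !HpenE // ?(simplex_ev q).1 // sum_ev !muth_sum sum_evZ.
set m := \sum_j th j *: muhat A b y j.
set mu := muhat A b y.
have E1 : forall j, Delta A b sigma f xi j q = 2 * dotv xi (mu j) - 2 * dotv xi (mu q)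
    - 2 * sigma ^+ 2 * (\tr (A j) - \tr (A q)).
  by move=> j; rewrite DeltaE dotvBr; ring.
have -> : \sum_j th j * (Delta A b sigma f xi j q - sqnorm (mu j - mu q) / 2) =
   \sum_j (2 * (th j * dotv xi (mu j)) + (- 2 * dotv xi (mu q)) * th j
     + (- 2 * sigma ^+ 2) * (th j * \tr (A j)) + (2 * sigma ^+ 2 * \tr (A q)) * th j
     + (- 1 / 2) * (th j * sqnorm (mu j)) + (th j * dotv (mu q) (mu j))
     + (- sqnorm (mu q) / 2) * th j).
  apply: eq_bigr => j _; rewrite E1 sqnormB (dotvC (mu j)); by field.
rewrite !big_split /= -!mulr_sumr s1.
have -> : \sum_j th j * cc sigma y j = -2 * (\sum_j th j * dotv y (muhat A b y j))
   + 2 * sigma ^+ 2 * (\sum_j th j * \tr (A j)) + (\sum_j th j * sqnorm (muhat A b y j)) / 2.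
  rewrite !mulr_sumr mulr_suml -!big_split /=; apply: eq_bigr => j _.
  rewrite /cc; ring.
rewrite -/mu -!dotv_sumr -/m /cc.
rewrite !sqnormB !(dotvDl _ f xi) -/y -/mu (dotvC f m) (dotvC f (mu q)) (dotvC (mu q) m).
lra.
Qed.

End vec.


Theorem proposition3p3 (R : realType) (d : measure_display)
  (T : measurableType d) (P : probability T R) (n M : nat)
  (sigma : R) (f : 'cV[R]_n) (xi : 'I_n -> {RV P >-> R})
  (A : 'I_M -> 'M[R]_n) (b : 'I_M -> 'cV[R]_n)
  (thetahat : T -> 'I_M -> R) :
  (2 <= M)%N ->
  mutually_independent P (fun i => (xi i : T -> R)) ->
  identically_distributed P (fun i => (xi i : T -> R)) ->
  (forall i, (xi i : T -> R) \in Lfun P 2%:E) ->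
  (forall i, ('E_P[xi i] = 0)%E) ->
  (forall i, ('V_P[xi i] = (sigma ^+ 2)%:E)%E) ->
  (forall w, let y := f + \col_i xi i w in
     simplex (thetahat w) /\
     forall theta, simplex theta ->
       Hpen A b sigma y (thetahat w) <= Hpen A b sigma y theta) ->
  (* almost-sure oracle inequality *)
  ({ae P, forall w,
     let xiw := \col_i xi i w in
     let y := f + xiw in
     ((sqnorm (muth A b y (thetahat w) - f))%:E <=
        \big[Order.min/+oo%E]_(q < M) (sqnorm (muhat A b y q - f))%:E
      + \big[Order.max/-oo%E]_(j < M) \big[Order.max/-oo%E]_(k < M)
          (Delta A b sigma f xiw j k - sqnorm (muhat A b y j - muhat A b y k) / 2)%:E)%E})
  /\
  (* expectation identity *)
  (forall j k : 'I_M,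
     ('E_P[fun w => (sqnorm (muhat A b (f + \col_i xi i w) j
                         - muhat A b (f + \col_i xi i w) k) / 2)%R]
     = (sqnorm ((A j - A k) *m f + b j - b k) / 2
        + sigma ^+ 2 / 2 * frob2 (A j - A k))%R%:E)%E).
Proof.
move=> hM ind idd L2 E0 V hmin.
have M0 : (0 < M)%N by apply: leq_trans hM.
pose i0 := Ordinal M0.
split.
  apply: aeW => w /=.
  set xiw := \col_i xi i w.
  have [sth hm] := hmin w.
  set N := fun q => sqnorm (muhat A b (f + xiw) q - f).
  pose q0 := [arg min_(q < i0) N q]%O.
  have hq0 : forall q, N q0 <= N q.
    by rewrite /q0; case: arg_minP => // q _ Hq q'; apply: Hq.
  set B := fun j => Delta A b sigma f xiw j q0
      - sqnorm (muhat A b (f + xiw) j - muhat A b (f + xiw) q0) / 2.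
  pose j0 := [arg max_(j > i0) B j]%O.
  have hj0 : forall j, B j <= B j0.
    by rewrite /j0; case: arg_maxP => // j _ Hj j'; apply: Hj.
  have hor := @oracle_real R n M A b sigma f xiw (thetahat w) q0 sth hm.
  have hsum : \sum_j thetahat w j * B j <= B j0.
    have -> : B j0 = \sum_j thetahat w j * B j0 by rewrite -mulr_suml sth.1 mul1r.
    apply: ler_sum => j _; apply: ler_wpM2l; [exact: sth.2 | exact: hj0].
  have hreal : sqnorm (muth A b (f + xiw) (thetahat w) - f) <= N q0 + B j0.
    apply: (le_trans hor); rewrite /N lerD2l; exact: hsum.
  apply: (le_trans (y := ((N q0)%:E + (B j0)%:E)%E)).
    by rewrite -EFinD lee_fin.
  apply: leeD.
    apply/bigmin_geP; split; first by rewrite leey.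
    by move=> q _; rewrite lee_fin; exact: hq0.
  apply: (@bigmax_sup _ _ _ _ j0) => //.
  apply: (@bigmax_sup _ _ _ _ q0) => //.
move=> j k.
pose x := fun i => (xi i : T -> R).
have L1 : forall l, x l \in Lfun P 1.
  move=> l; apply: Lfun_subset12; [by rewrite fin_num_measure | exact: L2].
have L2' : forall l m, x l \* x m \in Lfun P 1.
  by move=> l m; apply: Lfun2_mul_Lfun1; [exact: L2 | exact: L2].
have E1 : forall l, Er P (x l) = 0 by move=> l; rewrite /Er E0.
have E2 : forall l m, Er P (x l \* x m) = if l == m then sigma ^+ 2 else 0.
  move=> l m; case: eqVneq => [<-|lm].
    have := varianceE (L2 l); rewrite V E0 /Er.
    rewrite expe2 mul0e sube0 => h.
    have -> : x l \* x l = (xi l : T -> R) ^+ 2 by [].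
    by rewrite -h.
  rewrite /Er (@indep_mul0 _ _ _ P (xi l) (xi m)) //.
  exact: indep_pair ind lm.
have -> : (fun w => sqnorm (muhat A b (f + \col_i xi i w) j
                         - muhat A b (f + \col_i xi i w) k) / 2) =
   (fun w => sqnorm (((A j - A k) *m f + b j - b k) + (A j - A k) *m \col_i x i w) / 2).
  apply/funext => w; congr (sqnorm _ / 2).
  rewrite /muhat !mulmxBl !mulmxDr; apply/matrixP => i l; rewrite !mxE; ring.
exact: E_quad.
Qed.
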